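(* Let $q\not\equiv0\pmod3$, $\mu\in\mathbb{F}_q$, and let $\ell_\mu$ be the line through $\mathbf{P}(0,\mu,0,1)$ and $\mathbf{P}(1,0,1,0)$. Then: (i) $\ell_\mu$ is an imaginary axis if and only if $q$ is odd, $q\equiv-1\pmod3$ and $\mu=1/9$; (ii) $\ell_\mu$ is a real axis if and only if $q$ is odd, $q\equiv1\pmod3$ and $\mu=1/9$.
   Context: Points of $\mathrm{PG}(3,q)$ are written $\mathbf{P}(x_0,x_1,x_2,x_3)$ over $\mathbb{F}_q$. For $t$ in $\mathbb{F}_q$ or $\mathbb{F}_{q^2}$ the osculating plane $\pi_{osc}(t)$ of the twisted cubic $\{\mathbf{P}(t^3,t^2,t,1)\}\cup\{\mathbf{P}(1,0,0,0)\}$ is the plane $x_0-3tx_1+3t^2x_2-t^3x_3=0$, and $\pi_{osc}(\infty)$ is $x_3=0$. A real axis is a line $\pi_{osc}(t_1)\cap\pi_{osc}(t_2)$ with $t_1\ne t_2$ in $\mathbb{F}_q\cup\{\infty\}$; an imaginary axis is a line of $\mathrm{PG}(3,q)$ of the form $\pi_{osc}(t_1)\cap\pi_{osc}(t_2)$ with $t_1,t_2=t_1^q\in\mathbb{F}_{q^2}\setminus\mathbb{F}_q$. *)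

(* Defs.v *)
From HB Require Import structures.
From mathcomp Require Import all_boot all_order all_algebra all_field.
Set Implicit Arguments. Unset Strict Implicit. Unset Printing Implicit Defensive.
Import GRing.Theory.
Local Open Scope ring_scope.

(* Vectors of K^4 representing points P(x0,x1,x2,x3) of PG(3,K). *)
Definition pt {K : fieldType} (a b c d : K) : 'rV[K]_4 :=
  \row_(i < 4) [:: a; b; c; d]`_i.

Definition crd {K : fieldType} (x : 'rV[K]_4) (i : nat) : K := x ord0 (inord i).

Definition osc_plane {K : fieldType} (t : K) (x : 'rV[K]_4) : Prop :=
  crd x 0 - 3 * t * crd x 1 + 3 * t ^+ 2 * crd x 2 - t ^+ 3 * crd x 3 = 0.

(* t in K u {infinity}; None is infinity, pi_osc(infinity) : x3 = 0. *)
Definition osc_plane_inf {K : fieldType} (t : option K) (x : 'rV[K]_4) : Prop :=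
  match t with
  | Some s => osc_plane s x
  | None => crd x 3 = 0
  end.

(* Vector subspace spanned by u and v (the line through P(u), P(v)),
   described as a set of vectors of K^4. *)
Definition span2 {K : fieldType} (u v : 'rV[K]_4) (x : 'rV[K]_4) : Prop :=
  exists a b : K, x = a *: u + b *: v.

Definition ell {K : fieldType} (mu : K) : 'rV[K]_4 -> Prop :=
  span2 (pt 0 mu 0 1) (pt 1 0 1 0).

Definition real_axis {F : fieldType} (S : 'rV[F]_4 -> Prop) : Prop :=
  exists t1 t2 : option F, t1 <> t2 /\
    forall x, S x <-> (osc_plane_inf t1 x /\ osc_plane_inf t2 x).

(* Imaginary axis: with F_{q^2} given as L together with the embedding
   iota : F -> L, the line of PG(3,q) consisting of the F-rational points of
   pi_osc(t1) cap pi_osc(t1^q), with t1 in L \ F. *)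
Definition imag_axis {F L : finFieldType} (iota : {rmorphism F -> L})
    (S : 'rV[F]_4 -> Prop) : Prop :=
  exists t1 : L, (forall a : F, t1 <> iota a) /\
    forall x, S x <-> (osc_plane t1 (map_mx iota x) /\
                       osc_plane (t1 ^+ #|F|) (map_mx iota x)).

(* Main.v *)
Require Import Defs.
From HB Require Import structures.
From mathcomp Require Import all_boot all_order all_algebra all_field all_fingroup all_solvable.
From mathcomp Require Import ring.
Import GRing.Theory.
Local Open Scope ring_scope.

Section Card.
Variable F : finFieldType.

Lemma card_pow p : p \in [pchar F] -> #|F| = (p ^ logn p #|F|)%N.
Proof. move=> pc; exact: (card_pprimeChar pc). Qed.

Lemma char_dvd p : prime p -> p%:R = 0 :> F -> (p %| #|F|)%N.
Proof.
move=> pp p0.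
have pc : p \in [pchar F] by rewrite inE pp p0 eqxx.
rewrite (card_pow _ pc).
case e: (logn p #|F|) => [|n].
  have := card_pow _ pc; rewrite e expn0 => h.
  by have := finNzRing_gt1 F; rewrite h.
by rewrite expnS dvdn_mulr.
Qed.

Lemma two_odd : (2%:R != 0 :> F) = odd #|F|.
Proof.
apply/idP/idP.
  move=> h2; have [p pp pc] := finPcharP F.
  rewrite (card_pow _ pc) oddX; apply/orP; right.
  case: (even_prime pp) => // ep; move: h2; rewrite -ep.
  by rewrite (pcharf0 pc) eqxx.
move=> od; apply/eqP => h2.
have := char_dvd _ (isT : prime 2) h2.
by rewrite dvdn2 od.
Qed.

Lemma three_nz : (#|F| %% 3 != 0)%N -> 3%:R != 0 :> F.
Proof.
move=> h; apply/eqP => h3.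
have := char_dvd _ (isT : prime 3) h3.
by rewrite /dvdn (negbTE h).
Qed.

Lemma cube_root : (#|F| %% 3 = 1)%N -> exists w : F, w ^+ 3 = 1 /\ w != 1.
Proof.
move=> h.
have d : (3 %| #|[set: {unit F}]|)%N.
  rewrite card_finField_unit.
  rewrite (divn_eq #|F| 3) h addn1 /=.
  by rewrite dvdn_mull.
have [x _ ox] := Cauchy (isT : prime 3) d.
exists (val x); split.
  by rewrite -FinRing.val_unitX -ox expg_order.
apply/eqP => x1.
have : x = 1%g by apply: val_inj.
by move=> e; move: ox; rewrite e order1.
Qed.

Lemma no_cube_root (w : F) : (#|F| %% 3 = 2)%N -> w ^+ 3 = 1 -> w = 1.
Proof.
move=> h w3.
have w0 : w != 0 by apply/eqP => w0; move: w3; rewrite w0 expr0n /= => /eqP; rewrite eq_sym oner_eq0.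
have := expf_card w.
rewrite (divn_eq #|F| 3) h exprD mulnC exprM w3 expr1n mul1r => e.
by apply: (mulIf w0); rewrite mul1r -expr2.
Qed.
End Card.

Lemma mod3_cases n : (n %% 3 != 0)%N -> (n %% 3 = 1)%N \/ (n %% 3 = 2)%N.
Proof.
have : (n %% 3 < 3)%N by rewrite ltn_mod.
by case: (n %% 3)%N => [|[|[|]]] //= _ _; [left|right].
Qed.

Lemma sq_fwd (F : finFieldType) (s : F) : 2%:R != 0 :> F -> (#|F| %% 3 != 0)%N ->
  3%:R * s ^+ 2 = -1 -> (#|F| %% 3 = 1)%N.
Proof.
move=> h2 hq hs.
have h3 : 3%:R * s ^+ 2 + 1 = 0 by rewrite hs addNr.
pose w := (3%:R * s - 1) / 2%:R.
have ew : w ^+ 3 - 1 = (3%:R * s ^+ 2 + 1) * (9%:R * s - 9%:R) / 8%:R.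
  rewrite /w; field.
  by rewrite (_ : 8%:R = 2%:R * 2%:R * 2%:R :> F) ?mulf_neq0 // -!natrM.
have w3 : w ^+ 3 = 1 by apply/eqP; rewrite -subr_eq0 ew h3 !mul0r.
case: (mod3_cases _ hq) => // hm.
have w1 := no_cube_root _ _ hm w3.
have s1 : s = 1.
  have : 3%:R * s - 1 = 2%:R.
    by rewrite -[RHS]mulr1 -w1 /w; field.
  move=> e.
  have : 3%:R * (s - 1) = (3%:R * s - 1) - 2%:R by ring.
  rewrite e subrr => /eqP; rewrite mulf_eq0 subr_eq0 (negbTE (three_nz _ hq)) /=.
  by move/eqP.
move: h3; rewrite s1 expr1n mulr1 => h3.
have : 2%:R * 2%:R = 0 :> F by rewrite -h3; ring.
by move/eqP; rewrite mulf_eq0 (negbTE h2).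
Qed.

Lemma sq_bwd (F : finFieldType) : (#|F| %% 3 = 1)%N ->
  exists t : F, 3%:R * t ^+ 2 = -1.
Proof.
move=> hm.
have h3 : 3%:R != 0 :> F by apply: three_nz; rewrite hm.
have [w [w3 w1]] := cube_root _ hm.
have ww : w ^+ 2 + w + 1 = 0.
  have : (w - 1) * (w ^+ 2 + w + 1) = 0.
    have -> : (w - 1) * (w ^+ 2 + w + 1) = w ^+ 3 - 1 by ring.
    by rewrite w3 subrr.
  by move/eqP; rewrite mulf_eq0 subr_eq0 (negbTE w1) /= => /eqP.
exists ((2%:R * w + 1) / 3%:R).
apply/eqP; rewrite -subr_eq0.
have -> : 3%:R * ((2%:R * w + 1) / 3%:R) ^+ 2 - -1 = 4%:R * (w ^+ 2 + w + 1) / 3%:R :> F.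
  by field.
by rewrite ww mulr0 mul0r.
Qed.

Section Coords.
Variable K : fieldType.

Lemma crd_pt (a b c d : K) :
  [/\ crd (pt a b c d) 0 = a, crd (pt a b c d) 1 = b, crd (pt a b c d) 2 = c
    & crd (pt a b c d) 3 = d].
Proof. by rewrite /crd /pt !mxE !inordK. Qed.

Lemma crd_lin (a b : K) (x y : 'rV[K]_4) i :
  crd (a *: x + b *: y) i = a * crd x i + b * crd y i.
Proof. by rewrite /crd !mxE. Qed.

Lemma crd_map (K' : fieldType) (f : {rmorphism K -> K'}) (x : 'rV[K]_4) i :
  crd (map_mx f x) i = f (crd x i).
Proof. by rewrite /crd mxE. Qed.

Lemma row4_eq (x y : 'rV[K]_4) :
  crd x 0 = crd y 0 -> crd x 1 = crd y 1 -> crd x 2 = crd y 2 -> crd x 3 = crd y 3 -> x = y.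
Proof.
rewrite /crd => h0 h1 h2 h3; apply/rowP => j.
have -> : j = inord (val j) by rewrite inord_val.
case: j => [[|[|[|[|j]]]] hj] //=.
Qed.

Lemma ell_coords (mu : K) x : ell mu x ->
  exists a b : K, [/\ crd x 0 = b, crd x 1 = a * mu, crd x 2 = b & crd x 3 = a].
Proof.
case=> a [b ->]; exists a, b.
have [p0 p1 p2 p3] := crd_pt 0 mu 0 1; have [q0 q1 q2 q3] := crd_pt 1 0 1 0.
by rewrite !crd_lin p0 p1 p2 p3 q0 q1 q2 q3; split; ring.
Qed.

Lemma ell_of (mu : K) x : 9%:R * mu = 1 -> crd x 0 = crd x 2 ->
  9%:R * crd x 1 = crd x 3 -> ell mu x.
Proof.
move=> hmu h02 h13; exists (crd x 3), (crd x 0).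
have [p0 p1 p2 p3] := crd_pt 0 mu 0 1; have [q0 q1 q2 q3] := crd_pt 1 0 1 0.
apply: row4_eq; rewrite !crd_lin ?p0 ?p1 ?p2 ?p3 ?q0 ?q1 ?q2 ?q3 -?h02; try ring.
have e : crd x 1 = crd x 1 * (9%:R * mu) by rewrite hmu mulr1.
by rewrite {1}e -h13; ring.
Qed.

Lemma plane_of (t m a b : K) x : 3%:R != 0 :> K -> 3%:R * t ^+ 2 = -1 -> 9%:R * m = 1 ->
  crd x 0 = b -> crd x 1 = a * m -> crd x 2 = b -> crd x 3 = a -> osc_plane t x.
Proof.
move=> h3 ht hm e0 e1 e2 e3; rewrite /osc_plane e0 e1 e2 e3.
apply: (mulIf h3); rewrite mul0r.
have -> : (b - 3%:R * t * (a * m) + 3%:R * t ^+ 2 * b - t ^+ 3 * a) * 3%:R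
  = 3%:R * b * (1 + 3%:R * t ^+ 2) - a * t * (9%:R * m + 3%:R * t ^+ 2) by ring.
by rewrite ht hm !addrN !mulr0 subrr.
Qed.
End Coords.

Lemma plane_eq (K : fieldType) (t : K) x : 3%:R * t ^+ 2 = -1 -> osc_plane t x ->
  3%:R * (crd x 0 - crd x 2) = t * (9%:R * crd x 1 - crd x 3).
Proof.
rewrite /osc_plane => ht hp; apply/eqP; rewrite -subr_eq0; apply/eqP.
have -> : 3%:R * (crd x 0 - crd x 2) - t * (9%:R * crd x 1 - crd x 3)
  = 3%:R * (crd x 0 - 3%:R * t * crd x 1 + 3%:R * t ^+ 2 * crd x 2 - t ^+ 3 * crd x 3)
    + (3%:R * t ^+ 2 + 1) * (t * crd x 3 - 3%:R * crd x 2) by ring.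
by rewrite hp ht addNr !mul0r mulr0 addr0.
Qed.

Lemma ell_u (K : fieldType) (mu : K) : ell mu (pt 0 mu 0 1).
Proof. by exists 1, 0; rewrite scale1r scale0r addr0. Qed.
Lemma ell_v (K : fieldType) (mu : K) : ell mu (pt 1 0 1 0).
Proof. by exists 0, 1; rewrite scale1r scale0r add0r. Qed.

Lemma plane_uv (K : fieldType) (mu t : K) :
  osc_plane t (pt 0 mu 0 1) -> osc_plane t (pt 1 0 1 0) ->
  3%:R * t ^+ 2 = -1 /\ 9%:R * mu = 1.
Proof.
rewrite /osc_plane.
have [p0 p1 p2 p3] := crd_pt _ 0 mu 0 1; have [q0 q1 q2 q3] := crd_pt K 1 0 1 0.
rewrite p0 p1 p2 p3 q0 q1 q2 q3 => hu hv.
have ht : 3%:R * t ^+ 2 = -1.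
  by apply/eqP; rewrite -subr_eq0 opprK -hv; apply/eqP; ring.
split=> //.
have t0 : t != 0 by apply/eqP => t0; move: ht; rewrite t0 expr0n /= mulr0 => /eqP; rewrite eq_sym oppr_eq0 oner_eq0.
have : t * (9%:R * mu - 1) = 0.
  have -> : t * (9%:R * mu - 1) = - 3%:R * (0 - 3%:R * t * mu + 3%:R * t ^+ 2 * 0 - t ^+ 3 * 1) - t * (3%:R * t ^+ 2 + 1) by ring.
  by rewrite hu ht addNr !mulr0 subrr.
by move/eqP; rewrite mulf_eq0 (negbTE t0) subr_eq0 => /eqP.
Qed.

Lemma map_pt (K K' : fieldType) (f : {rmorphism K -> K'}) (a b c d : K) :
  map_mx f (pt a b c d) = pt (f a) (f b) (f c) (f d).
Proof.
have [p0 p1 p2 p3] := crd_pt K a b c d.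
have [q0 q1 q2 q3] := crd_pt K' (f a) (f b) (f c) (f d).
by apply: row4_eq; rewrite crd_map ?p0 ?p1 ?p2 ?p3 ?q0 ?q1 ?q2 ?q3.
Qed.

Theorem lemma4p3 (F L : finFieldType) (iota : {rmorphism F -> L})
  (hL : #|L| = (#|F| ^ 2)%N) (hq : (#|F| %% 3 != 0)%N) (mu : F) :
  (imag_axis iota (ell mu) <->
     [/\ odd #|F|, (#|F| %% 3 = 2)%N & mu = 9^-1]) /\
  (real_axis (ell mu) <->
     [/\ odd #|F|, (#|F| %% 3 = 1)%N & mu = 9^-1]).
Proof.
have h3F := three_nz _ hq.
have h3L : 3%:R != 0 :> L by rewrite -(rmorph_nat iota) fmorph_eq0.
have mu_of : 9%:R * mu = 1 -> mu = 9^-1.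
  move=> h; have h9 : 9%:R != 0 :> F by apply/eqP => h9; move: h; rewrite h9 mul0r => /eqP; rewrite eq_sym oner_eq0.
  by apply: (mulfI h9); rewrite h mulfV.
have of_mu : mu = 9^-1 -> 9%:R * mu = 1.
  move=> ->; apply: mulfV; rewrite (_ : 9 = 3 * 3)%N // natrM mulf_neq0 //.
split; split.
- case=> t1 [tnot H].
  have [hu _] := (H _).1 (ell_u _ mu); have [hv _] := (H _).1 (ell_v _ mu).
  rewrite !map_pt !rmorph0 !rmorph1 in hu hv.
  have [ht hm] := plane_uv _ _ _ hu hv.
  have hmu : 9%:R * mu = 1 by apply: (fmorph_inj iota); rewrite rmorphM rmorph_nat rmorph1.
  have h2 : 2%:R != 0 :> F.
    apply/eqP => h2.
    have h2L : 2%:R = 0 :> L by rewrite -(rmorph_nat iota) h2 rmorph0.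
    apply: (tnot (-1)); rewrite rmorphN rmorph1.
    have : (t1 + 1) ^+ 2 = 0.
      have -> : (t1 + 1) ^+ 2 = (3%:R * t1 ^+ 2 + 1) + 2%:R * (t1 - t1 ^+ 2) by ring.
      by rewrite ht addNr h2L mul0r addr0.
    by move/eqP; rewrite expf_eq0 /= addr_eq0 => /eqP.
  split; first by rewrite -two_odd.
  - case: (mod3_cases _ hq) => // hm1.
    have [s hs] := sq_bwd _ hm1.
    have hsL : 3%:R * (iota s) ^+ 2 = -1 by rewrite -(rmorph_nat iota) -rmorphXn -rmorphM hs rmorphN rmorph1.
    have : (t1 - iota s) * (t1 + iota s) = 0.
      apply: (mulfI h3L); rewrite mulr0.
      have -> : 3%:R * ((t1 - iota s) * (t1 + iota s)) = 3%:R * t1 ^+ 2 - 3%:R * (iota s) ^+ 2 by ring.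
      by rewrite ht hsL subrr.
    move/eqP; rewrite mulf_eq0 subr_eq0 addr_eq0 => /orP[] /eqP e.
      by case: (tnot s).
    by case: (tnot (- s)); rewrite rmorphN.
  - exact: mu_of.
- case=> od hm hmu.
  have h2F : 2%:R != 0 :> F by rewrite two_odd.
  have hmL : (#|L| %% 3 = 1)%N by rewrite hL -modnXm hm.
  have [t ht] := sq_bwd _ hmL.
  have h9 := of_mu hmu.
  have h9L : 9%:R * iota mu = 1 by rewrite -(rmorph_nat iota) -rmorphM h9 rmorph1.
  have tnot : forall a : F, t <> iota a.
    move=> a ta.
    have : 3%:R * a ^+ 2 = -1.
      apply: (fmorph_inj iota); rewrite rmorphM rmorphXn rmorph_nat -ta ht rmorphN rmorph1 //.
    by move/(sq_fwd _ _ h2F hq); rewrite hm.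
  have htq : 3%:R * (t ^+ #|F|) ^+ 2 = -1.
    have et : t ^+ 2 = iota (- 3%:R^-1).
      rewrite rmorphN fmorphV rmorph_nat.
      by apply: (mulfI h3L); rewrite ht mulrN mulfV.
    by rewrite -exprM mulnC exprM et -rmorphXn expf_card -et.
  exists t; split => // x; split.
  + move=> /ell_coords [a [b [e0 e1 e2 e3]]].
    split; apply: (plane_of _ _ (iota mu) (iota a) (iota b)) => //;
      by rewrite crd_map ?e0 ?e1 ?e2 ?e3 ?rmorphM.
  + case=> P _.
    have := plane_eq _ _ _ ht P; rewrite !crd_map => e.
    have hd : 9%:R * crd x 1 - crd x 3 = 0.
      apply/eqP; apply/negP => /negP d0.
      apply: (tnot (3%:R * (crd x 0 - crd x 2) / (9%:R * crd x 1 - crd x 3))).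
      rewrite fmorph_div rmorphM rmorphB rmorph_nat e rmorphB rmorphM rmorph_nat mulfK //.
      by rewrite -(rmorph_nat iota) -rmorphM -rmorphB fmorph_eq0.
    apply: ell_of => //.
      have e2 : 9%:R * iota (crd x 1) - iota (crd x 3) = 0.
        by rewrite -(rmorph_nat iota) -rmorphM -rmorphB hd rmorph0.
      move: e; rewrite e2 mulr0 => /eqP; rewrite mulf_eq0 (negbTE h3L) subr_eq0 /=.
      by move/eqP/fmorph_inj.
    by apply/eqP; rewrite -subr_eq0 hd.
- case=> t1 [t2 [hne H]].
  have [hu1 hu2] := (H _).1 (ell_u _ mu); have [hv1 hv2] := (H _).1 (ell_v _ mu).
  have [p0 p1 p2 p3] := crd_pt F 0 mu 0 1.
  clear H; case: t1 hne hu1 hv1 => [t1|] hne hu1 hv1; last by move: hu1; rewrite /= p3 => /eqP; rewrite oner_eq0.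
  case: t2 hne hu2 hv2 => [t2|] hne hu2 hv2; last by move: hu2; rewrite /= p3 => /eqP; rewrite oner_eq0.
  have [ht1 hmu] := plane_uv _ _ _ hu1 hv1.
  have [ht2 _] := plane_uv _ _ _ hu2 hv2.
  have h2 : 2%:R != 0 :> F.
    apply/eqP => h2.
    have : (t1 - t2) * (t1 + t2) = 0.
      apply: (mulfI h3F); rewrite mulr0.
      have -> : 3%:R * ((t1 - t2) * (t1 + t2)) = 3%:R * t1 ^+ 2 - 3%:R * t2 ^+ 2 by ring.
      by rewrite ht1 ht2 subrr.
    move/eqP; rewrite mulf_eq0 subr_eq0 => /orP[/eqP e|e]; first by apply: hne; rewrite e.
    apply: hne; congr Some.
    have -> : t1 = t2 + (t1 + t2) - 2%:R * t2 by ring.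
    by rewrite (eqP e) h2 mul0r subr0 addr0.
  split; first by rewrite -two_odd.
  - exact: (sq_fwd _ _ h2 hq ht1).
  - exact: mu_of.
- case=> od hm hmu.
  have h2F : 2%:R != 0 :> F by rewrite two_odd.
  have [t ht] := sq_bwd _ hm.
  have h9 := of_mu hmu.
  have ht' : 3%:R * (- t) ^+ 2 = -1 by rewrite sqrrN.
  exists (Some t), (Some (- t)); split.
    move=> [] e.
    have : 2%:R * t = t - (- t) by ring.
    rewrite -e subrr.
    move/eqP; rewrite mulf_eq0 (negbTE h2F) /= => /eqP t0.
    by move: ht; rewrite t0 expr0n mulr0 => /eqP; rewrite eq_sym oppr_eq0 oner_eq0.
  move=> x; split.
  + move=> /ell_coords [a [b [e0 e1 e2 e3]]].
    by split; apply: (plane_of _ _ mu a b).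
  + case=> /= P1 P2.
    have E1 := plane_eq _ _ _ ht P1; have E2 := plane_eq _ _ _ ht' P2.
    have t0 : t != 0.
      by apply/eqP => t0; move: ht; rewrite t0 expr0n mulr0 => /eqP; rewrite eq_sym oppr_eq0 oner_eq0.
    have hd : 9%:R * crd x 1 - crd x 3 = 0.
      have : 2%:R * t * (9%:R * crd x 1 - crd x 3) = 0.
        have -> : 2%:R * t * (9%:R * crd x 1 - crd x 3) = t * (9%:R * crd x 1 - crd x 3) - (- t) * (9%:R * crd x 1 - crd x 3) by ring.
        by rewrite -E1 -E2 subrr.
      by move/eqP; rewrite !mulf_eq0 (negbTE h2F) (negbTE t0) /= => /eqP.
    apply: ell_of => //.
      move: E1; rewrite hd mulr0 => /eqP; rewrite mulf_eq0 (negbTE h3F) subr_eq0 /=.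
      by move/eqP.
    by apply/eqP; rewrite -subr_eq0 hd.
Qed.
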